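(* Let $N,d,e,s\in\mathbb{N}$ (with $N,d\neq0$) and $\lambda,\lambda'\in\mathbb{Q}$, and let $L\subseteq\mathbb{Q}^2$ be the lattice generated by \[\left(\tfrac1N,\tfrac1N\right),\quad(\lambda,\lambda'),\quad\left(\tfrac ed\lambda+\tfrac{s}{Nd},\ \tfrac ed\lambda'+\tfrac{s}{Nd}\right).\] Let $r$ be any integer such that $r e/\gcd(d,e)\equiv1\pmod{d/\gcd(d,e)}$, and set \[\widetilde\lambda=\frac{\gcd(d,e)}{d}\lambda+\frac{rs}{Nd},\qquad\widetilde\lambda'=\frac{\gcd(d,e)}{d}\lambda'+\frac{rs}{Nd},\qquad\widetilde N=N\frac{\gcd(d,e)}{\gcd(d,e,s)}.\] Then $L$ is generated by $(1/\widetilde N,1/\widetilde N)$ and $(\widetilde\lambda,\widetilde\lambda')$. *)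

(* Defs.v *)
From HB Require Import structures.
From mathcomp Require Import all_boot all_order all_algebra.
Set Implicit Arguments. Unset Strict Implicit. Unset Printing Implicit Defensive.
Import Order.TTheory GRing.Theory Num.Theory.
Local Open Scope ring_scope.

Definition zspan (gs : seq (rat * rat)) (v : rat * rat) : Prop :=
  exists cs : seq int, size cs = size gs /\
    v = (\sum_(i < size gs) (cs`_i)%:~R * (nth (0, 0) gs i).1,
         \sum_(i < size gs) (cs`_i)%:~R * (nth (0, 0) gs i).2).

Definition same_lattice (gs hs : seq (rat * rat)) : Prop :=
  forall v, zspan gs v <-> zspan hs v.

(* Main.v *)
Require Import Defs.
From HB Require Import structures.
From mathcomp Require Import all_boot all_order all_algebra.
From mathcomp Require Import ring lra.
Import Order.TTheory GRing.Theory Num.Theory.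
Local Open Scope ring_scope.

Lemma zspan3P a b c v : zspan [:: a; b; c] v <->
  exists x y z : int, v = (x%:~R * a.1 + y%:~R * b.1 + z%:~R * c.1,
                           x%:~R * a.2 + y%:~R * b.2 + z%:~R * c.2).
Proof.
rewrite /zspan; split.
  move=> [cs [hs ->]]; exists cs`_0, cs`_1, cs`_2.
  by rewrite /= !big_ord_recl !big_ord0 /= !addr0 !addrA.
move=> [x [y [z ->]]]; exists [:: x; y; z]; split => //.
by rewrite /= !big_ord_recl !big_ord0 /= !addr0 !addrA.
Qed.

Lemma zspan2P a b v : zspan [:: a; b] v <->
  exists x y : int, v = (x%:~R * a.1 + y%:~R * b.1,
                           x%:~R * a.2 + y%:~R * b.2).
Proof.
rewrite /zspan; split.
  move=> [cs [hs ->]]; exists cs`_0, cs`_1.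
  by rewrite /= !big_ord_recl !big_ord0 /= !addr0.
move=> [x [y ->]]; exists [:: x; y]; split => //.
by rewrite /= !big_ord_recl !big_ord0 /= !addr0.
Qed.

Lemma intrn (n : nat) : (n%:Z)%:~R = n%:R :> rat.
Proof. by []. Qed.

Lemma key (N d e s g gs d' e' g'' s'' : nat) (lam lam' : rat) (r t al be : int) :
 (N != 0)%N -> (d' != 0)%N -> (gs != 0)%N -> (g'' != 0)%N ->
 d = (d' * g)%N -> e = (e' * g)%N -> g = (g'' * gs)%N -> s = (s'' * gs)%N ->
 r * e'%:Z = 1 + t * d'%:Z -> al * g''%:Z + be * s''%:Z = 1 ->
 same_lattice
    [:: ((N%:R)^-1, (N%:R)^-1); (lam, lam');
        (e%:R / d%:R * lam + s%:R / (N * d)%N%:R,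
         e%:R / d%:R * lam' + s%:R / (N * d)%N%:R)]
    [:: (((N * g'')%N%:R)^-1, ((N * g'')%N%:R)^-1);
        (g%:R / d%:R * lam + (r * s%:Z)%:~R / (N * d)%N%:R,
         g%:R / d%:R * lam' + (r * s%:Z)%:~R / (N * d)%N%:R)].
Proof.
move=> N0 d0 gs0 g0 -> -> Eg -> hr hab; subst g.
have hr' : t%:~R = ((r%:~R * e'%:R - 1) / d'%:R : rat).
  have := congr1 (fun z : int => z%:~R : rat) hr; rewrite /= intrD intrM !intrn intrM => ->.
  by field; rewrite pnatr_eq0.
have hab' : al%:~R = ((1 - be%:~R * s''%:R) / g''%:R : rat).
  have := congr1 (fun z : int => z%:~R : rat) hab; rewrite /= intrD !intrM !intrn rmorph1.
  set A := (al%:~R : rat); set B := (be%:~R : rat); set G := (g''%:R : rat); set S := (s''%:R : rat).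
  have hG : G != 0 by rewrite pnatr_eq0.
  move=> h; rewrite -h; field; exact: hG.
have nz : [/\ (N%:R : rat) != 0, (d'%:R : rat) != 0, (gs%:R : rat) != 0 & (g''%:R : rat) != 0].
  by rewrite !pnatr_eq0.
case: nz => n1 n2 n3 n4.
move=> v; rewrite zspan3P zspan2P; split.
  move=> [x [y [z ->]]].
  exists (x * g''%:Z - y * r * s''%:Z - z * t * s''%:Z), (y * d'%:Z + z * e'%:Z).
  rewrite /= !(intrD, intrM, intrN, intrn, natrM) hr'.
  congr pair; field; rewrite ?n1 ?n2 ?n3 ?n4 //.
move=> [x [y ->]].
exists (x * al), (- x * be * e'%:Z - y * t), (x * be * d'%:Z + y * r).
rewrite /= !(intrD, intrM, intrN, intrn, natrM) hr' hab'.
congr pair; field; rewrite ?n1 ?n2 ?n3 ?n4 //.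
Qed.

Theorem corollary6p2 (N d e s : nat) (lam lam' : rat) (r : int) :
  (N != 0)%N -> (d != 0)%N ->
  (r * (e %/ gcdn d e)%N%:Z = 1 %[mod (d %/ gcdn d e)%N%:Z])%Z ->
  let g := gcdn d e in
  let Nt := (N * (g %/ gcdn g s))%N in
  let lt := (g%:R / d%:R) * lam + (r * s%:Z)%:~R / (N * d)%N%:R in
  let lt' := (g%:R / d%:R) * lam' + (r * s%:Z)%:~R / (N * d)%N%:R in
  same_lattice
    [:: ((N%:R)^-1, (N%:R)^-1); (lam, lam');
        (e%:R / d%:R * lam + s%:R / (N * d)%N%:R,
         e%:R / d%:R * lam' + s%:R / (N * d)%N%:R)]
    [:: ((Nt%:R)^-1, (Nt%:R)^-1); (lt, lt')].
Proof.
move=> N0 d0 hr g Nt lt lt'.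
have g0 : (0 < g)%N by rewrite gcdn_gt0 lt0n d0.
have gs0 : (0 < gcdn g s)%N by rewrite gcdn_gt0 g0.
have Ed : d = (d %/ g * g)%N by rewrite divnK // dvdn_gcdl.
have Ee : e = (e %/ g * g)%N by rewrite divnK // dvdn_gcdr.
have Eg : g = (g %/ gcdn g s * gcdn g s)%N by rewrite divnK // dvdn_gcdl.
have Es : s = (s %/ gcdn g s * gcdn g s)%N by rewrite divnK // dvdn_gcdr.
have d'0 : (d %/ g != 0)%N.
  by apply: contra d0 => /eqP h; rewrite Ed h.
have g''0 : (g %/ gcdn g s != 0)%N.
  by apply/eqP => h; move: g0; rewrite Eg h.
have gs0' : (gcdn g s != 0)%N by rewrite -lt0n.
move: hr => /eqP; rewrite eqz_mod_dvd => /dvdzP [t ht].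
have hr' : r * (e %/ g)%N%:Z = 1 + t * (d %/ g)%N%:Z by rewrite -ht addrC subrK.
have [al [be hab]] := Bezoutz (g%:Z) (s%:Z).
have hab' : al * (g %/ gcdn g s)%N%:Z + be * (s %/ gcdn g s)%N%:Z = 1.
  apply: (mulIf (x := (gcdn g s)%:Z)); first by rewrite eqz_nat.
  rewrite mul1r mulrDl -!mulrA -!PoszM -Eg -Es; exact: hab.
rewrite /Nt /lt /lt'; eapply key; [exact N0|exact d'0|exact gs0'|exact g''0|exact Ed|exact Ee|exact Eg|exact Es|exact hr'|exact hab'].
Qed.
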